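(* Let $\ell\ge 1$ be an integer and let $q_1,\dots,q_\ell:\mathbb{N}\to\mathbb{N}$ be increasing functions taking integer values on the integers, with $l\le q_1(l)<q_2(l)<\dots<q_\ell(l)$ for all $l\ge 1$. For each $n\ge1$ let $p_n\in(0,1)$ and let $\xi^{(n)}_1,\xi^{(n)}_2,\xi^{(n)}_3,\dots$ be independent random variables with $P\{\xi^{(n)}_i=1\}=p_n=1-P\{\xi^{(n)}_i=0\}$. Set $$S_n=\sum_{l=1}^n \xi^{(n)}_{q_1(l)}\xi^{(n)}_{q_2(l)}\cdots\xi^{(n)}_{q_\ell(l)},\qquad \lambda_n=np_n^\ell .$$ Then for every $\lambda>0$ and every $n\ge1$, $$\sup_{\Gamma\subset\mathbb{Z}_+}\big|P\{S_n\in\Gamma\}-P_\lambda(\Gamma)\big|\le (2\ell^2+1)p_n+2|\lambda-\lambda_n|e^{\max(\lambda,\lambda_n)},$$ where $P_\lambda(\Gamma)=\sum_{l\in\Gamma}e^{-\lambda}\lambda^l/l!$. In particular, if $\lim_{n\to\infty}np_n^\ell=\lambda>0$, the right-hand side tends to $0$ and $S_n$ converges in distribution to a Poisson random variable with parameter $\lambda$.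
   Context: $\mathbb{Z}_+$ denotes the set of nonnegative integers; $P_\lambda(\Gamma)$ is the probability assigned to $\Gamma\subset\mathbb{Z}_+$ by the Poisson distribution with parameter $\lambda$. *)

(* Defs.v *)
From Stdlib Require Import Reals Lra Lia Arith.
Open Scope R_scope.

(* An outcome: omega i = true iff xi_i = 1 (coordinates indexed by nat;
   only coordinates 1..m are random in [bern_expect p m], the rest are 0). *)
Definition upd (omega : nat -> bool) (k : nat) (b : bool) : nat -> bool :=
  fun i => if Nat.eqb i k then b else omega i.

Fixpoint bern_expect (p : R) (m : nat) (F : (nat -> bool) -> R) : R :=
  match m with
  | O => F (fun _ => false)
  | S m' => p * bern_expect p m' (fun w => F (upd w (S m') true))
            + (1 - p) * bern_expect p m' (fun w => F (upd w (S m') false))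
  end.

Definition b2n (b : bool) : nat := if b then 1%nat else 0%nat.

(* xi_{q_0(l)} * ... * xi_{q_(k-1)(l)}  (q j = q_{j+1} of the paper) *)
Fixpoint prod_xi (omega : nat -> bool) (q : nat -> nat -> nat) (l k : nat) : nat :=
  match k with
  | O => 1%nat
  | S k' => (b2n (omega (q k' l)) * prod_xi omega q l k')%nat
  end.

Fixpoint S_sum (omega : nat -> bool) (q : nat -> nat -> nat) (ell n : nat) : nat :=
  match n with
  | O => 0%nat
  | S n' => (prod_xi omega q (S n') ell + S_sum omega q ell n')%nat
  end.

(* P{S_n in Gamma}: S_n only involves xi_i with i <= q_ell(n), so it suffices
   to randomize coordinates 1..q_ell(n). *)
Definition prob_Sn_in (p : R) (q : nat -> nat -> nat) (ell n : nat)
    (Gamma : nat -> bool) : R :=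
  bern_expect p (q (ell - 1)%nat n)
    (fun w => if Gamma (S_sum w q ell n) then 1 else 0).

Definition poisson_term (lam : R) (Gamma : nat -> bool) (l : nat) : R :=
  if Gamma l then exp (- lam) * lam ^ l / INR (fact l) else 0.

(* Main.v *)
Require Import Defs.
From Stdlib Require Import Reals Lra Lia Arith FunctionalExtensionality Classical_Prop.
Open Scope R_scope.

Definition pi_ (lam : R) (k : nat) : R := exp (- lam) * lam ^ k / INR (fact k).
Definition Fc (lam : R) (k : nat) : R := sum_f_R0 (pi_ lam) k.
Definition sA (lam : R) (G : nat -> bool) (k : nat) : R :=
  sum_f_R0 (poisson_term lam G) k.

Lemma pi_pos lam k : 0 < lam -> 0 < pi_ lam k.
Proof.
  intros H; unfold pi_. apply Rdiv_lt_0_compat; [|apply INR_fact_lt_0].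
  apply Rmult_lt_0_compat; [apply exp_pos| apply pow_lt; lra].
Qed.

Lemma pi_S lam k : pi_ lam (S k) = pi_ lam k * lam / INR (S k).
Proof.
  unfold pi_. rewrite fact_simpl, mult_INR. simpl pow.
  assert (INR (fact k) <> 0) by apply INR_fact_neq_0.
  assert (INR (S k) <> 0) by (apply not_0_INR; lia).
  field; auto.
Qed.

Lemma pt_bounds lam G k : 0 < lam -> 0 <= poisson_term lam G k <= pi_ lam k.
Proof.
  intros H; unfold poisson_term. pose proof (pi_pos lam k H). unfold pi_ in *.
  destruct (G k); lra.
Qed.

Lemma exp_series x : infinite_sum (fun i => / INR (fact i) * x ^ i) (exp x).
Proof. unfold exp; destruct (exist_exp x) as [l Hl]; exact Hl. Qed.

Lemma Fc_cv lam : Un_cv (Fc lam) 1.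
Proof.
  pose proof (exp_series lam) as H.
  assert (Hc : Un_cv (fun _ : nat => exp (- lam)) (exp (- lam))).
  { intros e he; exists 0%nat; intros; unfold Rdist; rewrite Rminus_diag, Rabs_R0; lra. }
  pose proof (CV_mult _ _ _ _ Hc H) as H2.
  replace 1 with (exp (-lam) * exp lam).
  2:{ rewrite <- exp_plus. replace (-lam + lam) with 0 by ring. apply exp_0. }
  intros e he; destruct (H2 e he) as [N HN]; exists N; intros n Hn.
  specialize (HN n Hn). unfold Fc.
  replace (sum_f_R0 (pi_ lam) n) with (exp (- lam) * sum_f_R0 (fun i => / INR (fact i) * lam ^ i) n); auto.
  rewrite scal_sum. apply sum_eq. intros; unfold pi_; field. apply INR_fact_neq_0.
Qed.

Lemma Fc_growing lam : 0 < lam -> Un_growing (Fc lam).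
Proof. intros H n; unfold Fc; rewrite tech5; pose proof (pi_pos lam (S n) H); lra. Qed.

Lemma Fc_le1 lam k : 0 < lam -> Fc lam k <= 1.
Proof. intros H; apply (growing_ineq _ _ (Fc_growing lam H) (Fc_cv lam)). Qed.

Lemma Fc_pos lam k : 0 < lam -> 0 < Fc lam k.
Proof.
  intros H; induction k; unfold Fc in *; simpl; [apply pi_pos; auto|].
  pose proof (pi_pos lam (S k) H); lra.
Qed.

Lemma sA_growing lam G : 0 < lam -> Un_growing (sA lam G).
Proof. intros H n; unfold sA; rewrite tech5; pose proof (pt_bounds lam G (S n) H); lra. Qed.

Lemma sA_le_Fc lam G k : 0 < lam -> 0 <= sA lam G k <= Fc lam k.
Proof.
  intros H; induction k; unfold sA, Fc in *; simpl;
  [pose proof (pt_bounds lam G 0 H); lra|].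
  pose proof (pt_bounds lam G (S k) H); lra.
Qed.

Lemma sA_diff lam G k d : 0 < lam ->
  0 <= sA lam G (k + d) - sA lam G k <= Fc lam (k + d) - Fc lam k.
Proof.
  intros H; induction d. rewrite Nat.add_0_r; lra.
  rewrite Nat.add_succ_r. unfold sA, Fc in *; rewrite !tech5.
  pose proof (pt_bounds lam G (S (k + d)) H); lra.
Qed.

Lemma poisson_exists lam G : 0 < lam -> exists L, infinite_sum (poisson_term lam G) L.
Proof.
  intros H. destruct (growing_cv (sA lam G) (sA_growing lam G H)) as [L HL].
  { exists 1. intros x [n ->]. pose proof (sA_le_Fc lam G n H). pose proof (Fc_le1 lam n H). lra. }
  exists L. exact HL.
Qed.

Lemma lim_le_ev (u : nat -> R) a c K : Un_cv u a -> (forall N, (K <= N)%nat -> u N <= c) -> a <= c.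
Proof.
  intros Hu Hb. destruct (Rle_or_lt a c) as [h|h]; auto.
  destruct (Hu (a - c)) as [N HN]; [lra|].
  specialize (HN (max N K) ltac:(lia)). specialize (Hb (max N K) ltac:(lia)).
  unfold Rdist in HN. apply Rabs_def2 in HN. lra.
Qed.

Lemma lim_ge_ev (u : nat -> R) a c K : Un_cv u a -> (forall N, (K <= N)%nat -> c <= u N) -> c <= a.
Proof.
  intros Hu Hb. destruct (Rle_or_lt c a) as [h|h]; auto.
  destruct (Hu (c - a)) as [N HN]; [lra|].
  specialize (HN (max N K) ltac:(lia)). specialize (Hb (max N K) ltac:(lia)).
  unfold Rdist in HN. apply Rabs_def2 in HN. lra.
Qed.

Lemma L_bounds lam G L k : 0 < lam -> infinite_sum (poisson_term lam G) L ->
  sA lam G k <= L <= sA lam G k + (1 - Fc lam k).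
Proof.
  intros H HL. split.
  - apply (lim_ge_ev (sA lam G) L _ k HL). intros N HN.
    replace N with (k + (N - k))%nat by lia. pose proof (sA_diff lam G k (N-k) H); lra.
  - apply (lim_le_ev (sA lam G) L _ k HL). intros N HN.
    replace N with (k + (N - k))%nat by lia. pose proof (sA_diff lam G k (N-k) H).
    pose proof (Fc_le1 lam (k + (N-k)) H); lra.
Qed.

Lemma tail_fin lam k d : 0 < lam ->
  INR k * (Fc lam (k + d) - Fc lam k) <= lam * (Fc lam (k + d) - Fc lam k + pi_ lam k - pi_ lam (k + d)).
Proof.
  intros H; induction d. rewrite Nat.add_0_r; lra.
  rewrite Nat.add_succ_r. unfold Fc in *; rewrite tech5. rewrite pi_S.
  pose proof (pi_pos lam (k + d) H).
  assert (INR k <= INR (S (k + d))) by (apply le_INR; lia).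
  assert (0 < INR (S (k+d))) by (apply lt_0_INR; lia).
  assert (INR k * (pi_ lam (k + d) * lam / INR (S (k + d))) <= lam * pi_ lam (k+d)).
  { unfold Rdiv. replace (INR k * (pi_ lam (k + d) * lam * / INR (S (k + d))))
      with ((lam * pi_ lam (k+d)) * (INR k / INR (S (k+d)))) by (field; lra).
    rewrite <- (Rmult_1_r (lam * pi_ lam (k + d))) at 2.
    apply Rmult_le_compat_l; [nra|]. apply (Rmult_le_reg_r (INR (S (k+d)))); auto.
    unfold Rdiv; rewrite Rmult_assoc, Rinv_l; lra. }
  nra.
Qed.

Lemma tail_bound lam k : 0 < lam ->
  INR k * (1 - Fc lam k) <= lam * (1 - Fc lam k + pi_ lam k).
Proof.
  intros H. pose proof (pi_pos lam k H). pose proof (Fc_le1 lam k H).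
  destruct (Rle_or_lt (INR k) lam) as [h|h]. nra.
  assert (1 <= Fc lam k + lam * pi_ lam k / (INR k - lam)).
  { apply (lim_le_ev (Fc lam) 1 _ k (Fc_cv lam)). intros N HN.
    replace N with (k + (N - k))%nat by lia. pose proof (tail_fin lam k (N - k) H).
    pose proof (pi_pos lam (k + (N - k)) H).
    apply (Rmult_le_reg_l (INR k - lam)); [lra|].
    unfold Rdiv. rewrite Rmult_plus_distr_l.
    replace ((INR k - lam) * (lam * pi_ lam k * / (INR k - lam))) with (lam * pi_ lam k) by (field; lra).
    nra. }
  apply (Rmult_le_compat_l (INR k - lam)) in H2; [|lra].
  unfold Rdiv in H2. rewrite Rmult_plus_distr_l in H2.
  replace ((INR k - lam) * (lam * pi_ lam k * / (INR k - lam))) with (lam * pi_ lam k) in H2 by (field; lra).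
  nra.
Qed.

Lemma pi_S' lam k : lam * pi_ lam k = INR (S k) * pi_ lam (S k).
Proof. rewrite pi_S. assert (0 < INR (S k)) by (apply lt_0_INR; lia). field; lra. Qed.

Lemma beta_cond lam k : 0 < lam -> lam * Fc lam k <= INR (S k) * Fc lam (S k).
Proof.
  intros H; induction k.
  - unfold Fc; simpl sum_f_R0. rewrite pi_S'. pose proof (pi_pos lam 0 H). simpl INR. lra.
  - unfold Fc in *.
    assert (E1 : sum_f_R0 (pi_ lam) (S k) = sum_f_R0 (pi_ lam) k + pi_ lam (S k)) by apply tech5.
    assert (E2 : sum_f_R0 (pi_ lam) (S (S k)) = sum_f_R0 (pi_ lam) (S k) + pi_ lam (S (S k))) by apply tech5.
    pose proof (pi_S' lam (S k)) as E3. rewrite (S_INR (S k)) in *.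
    pose proof (Fc_pos lam (S k) H). unfold Fc in *.
    pose proof (pi_pos lam (S (S k)) H).
    assert (INR (S k) * sum_f_R0 (pi_ lam) (S k) <= (INR (S k)+1) * sum_f_R0 (pi_ lam) (S k)) by lra.
    rewrite E2, E1. rewrite E1 in IHk. nra.
Qed.

Definition gS (lam : R) (G : nat -> bool) (L : R) (k : nat) : R :=
  match k with
  | O => 0
  | S k' => (sA lam G k' - L * Fc lam k') / (lam * pi_ lam k')
  end.

Lemma stein_eq lam G L k : 0 < lam ->
  lam * gS lam G L (S k) - INR k * gS lam G L k = (if G k then 1 else 0) - L.
Proof.
  intros H. destruct k as [|k].
  - simpl. unfold sA, Fc; simpl. unfold poisson_term.
    pose proof (pi_pos lam 0 H). fold (pi_ lam 0).
    destruct (G 0%nat); field; lra.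
  - unfold gS. unfold sA, Fc. rewrite !tech5.
    pose proof (pi_S' lam k) as E. pose proof (pi_pos lam k H). pose proof (pi_pos lam (S k) H).
    assert (0 < INR (S k)) by (apply lt_0_INR; lia).
    unfold poisson_term. fold (pi_ lam (S k)). destruct (G (S k)).
    + replace (lam * pi_ lam k) with (INR (S k) * pi_ lam (S k)) by lra. field. lra.
    + replace (lam * pi_ lam k) with (INR (S k) * pi_ lam (S k)) by lra. field. lra.
Qed.

Lemma delta_bound lam G L k : 0 < lam -> infinite_sum (poisson_term lam G) L ->
  Rabs (gS lam G L (S (S k)) - gS lam G L (S k)) <= / lam.
Proof.
  intros H HL. unfold gS.
  pose proof (L_bounds lam G L (S k) H HL) as [HL1 HL2].
  pose proof (tail_bound lam (S k) H) as Ht.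
  pose proof (beta_cond lam k H) as Hb.
  pose proof (sA_le_Fc lam G k H) as Hs.
  pose proof (Fc_le1 lam (S k) H) as HF.
  pose proof (pi_S' lam k) as E. pose proof (pi_pos lam k H). pose proof (pi_pos lam (S k) H).
  assert (HK : 0 < INR (S k)) by (apply lt_0_INR; lia).
  assert (ES : sA lam G (S k) = sA lam G k + (if G (S k) then pi_ lam (S k) else 0)).
  { unfold sA at 1. rewrite tech5. unfold poisson_term, pi_. fold (sA lam G k). destruct (G (S k)); reflexivity. }
  assert (EF : Fc lam (S k) = Fc lam k + pi_ lam (S k)) by (unfold Fc; apply tech5).
  set (K := INR (S k)) in *. set (y := pi_ lam (S k)) in *. set (x := pi_ lam k) in *.
  set (F1 := Fc lam k) in *. set (s1 := sA lam G k) in *.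
  set (T := L - sA lam G (S k)).
  set (R := 1 - Fc lam (S k)).
  set (e := if G (S k) then 1 else 0).
  assert (He : 0 <= e <= 1) by (unfold e; destruct (G (S k)); lra).
  assert (ES' : sA lam G (S k) = s1 + e * y) by (rewrite ES; unfold e; destruct (G (S k)); ring).
  set (al := (K * R - lam * (R + y)) / (K * lam * y)).
  set (be := (lam * F1 - K * (F1 + y)) / (K * lam * y)).
  set (ga := R / lam + F1 / K).
  assert (Hx : lam * x = K * y) by lra.
  assert (ED : (sA lam G (S k) - L * Fc lam (S k)) / (lam * y) - (s1 - L * F1) / (lam * x)
               = al * s1 + be * T + e * ga).
  { unfold al, be, ga, T, R. rewrite ES', EF. rewrite Hx. field. repeat split; lra. }
  rewrite ED.
  assert (Hal : al <= 0).
  { unfold al, Rdiv. assert (0 < / (K * lam * y)) by (apply Rinv_0_lt_compat; apply Rmult_lt_0_compat; [apply Rmult_lt_0_compat|]; assumption).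
    unfold R; rewrite EF in *. nra. }
  assert (Hbe : be <= 0).
  { unfold be, Rdiv. assert (0 < / (K * lam * y)) by (apply Rinv_0_lt_compat; apply Rmult_lt_0_compat; [apply Rmult_lt_0_compat|]; assumption).
    rewrite EF in Hb. fold K in Hb. nra. }
  assert (Hga : -ga = al * F1 + be * R).
  { unfold al, be, ga, R. rewrite EF. field. repeat split; lra. }
  assert (Hga1 : ga <= / lam).
  { unfold ga. rewrite EF in Hb. fold K in Hb.
    assert (F1 / K <= (F1 + y) / lam).
    { unfold Rdiv. apply (Rmult_le_reg_l (K * lam)). nra.
      replace (K * lam * (F1 * / K)) with (lam * F1) by (field; lra).
      replace (K * lam * ((F1 + y) * / lam)) with (K * (F1 + y)) by (field; lra). lra. }
    unfold R in *. rewrite EF in *. unfold Rdiv in *.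
    replace (/ lam) with ((1 - (F1 + y)) * / lam + (F1 + y) * / lam) by (field; lra). lra. }
  assert (HT : 0 <= T <= R) by (unfold T, R; lra).
  apply Rabs_le. split.
  - assert (al * s1 >= al * F1) by nra. assert (be * T >= be * R) by nra.
    assert (0 <= e * ga).
    { apply Rmult_le_pos; [lra|]. unfold ga. pose proof (Fc_pos lam k H). unfold R.
      unfold Rdiv. apply Rplus_le_le_0_compat; apply Rmult_le_pos; try lra;
      left; apply Rinv_0_lt_compat; lra. }
    assert (- / lam <= - ga) by lra. lra.
  - assert (al * s1 <= 0) by nra. assert (be * T <= 0) by nra.
    assert (0 <= ga).
    { unfold ga. pose proof (Fc_pos lam k H). unfold R.
      unfold Rdiv. apply Rplus_le_le_0_compat; apply Rmult_le_pos; try lra;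
      left; apply Rinv_0_lt_compat; lra. }
    assert (e * ga <= ga) by nra. lra.
Qed.

Lemma g_lip lam G L a b : 0 < lam -> infinite_sum (poisson_term lam G) L ->
  (1 <= a)%nat -> (1 <= b)%nat ->
  Rabs (gS lam G L a - gS lam G L b) <= Rabs (INR a - INR b) / lam.
Proof.
  intros H HL.
  assert (Hd : forall a d, (1 <= a)%nat -> Rabs (gS lam G L (a + d) - gS lam G L a) <= INR d / lam).
  { intros a0 d Ha. induction d.
    - rewrite Nat.add_0_r, Rminus_diag, Rabs_R0. simpl; unfold Rdiv; lra.
    - rewrite Nat.add_succ_r. destruct a0 as [|a1]; [lia|].
      replace (S (S a1 + d)) with (S (S (a1 + d))) by lia.
      replace (S a1 + d)%nat with (S (a1 + d)) in IHd by lia.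
      pose proof (delta_bound lam G L (a1 + d) H HL).
      replace (gS lam G L (S (S (a1 + d))) - gS lam G L (S a1))
        with ((gS lam G L (S (S (a1 + d))) - gS lam G L (S (a1 + d))) + (gS lam G L (S (a1 + d)) - gS lam G L (S a1))) by ring.
      eapply Rle_trans; [apply Rabs_triang|]. rewrite S_INR.
      replace ((INR d + 1) / lam) with (/ lam + INR d / lam) by (field; lra). lra. }
  intros Ha Hb. destruct (Nat.le_ge_cases a b) as [h|h].
  - replace b with (a + (b - a))%nat by lia. rewrite Rabs_minus_sym.
    replace (INR a - INR (a + (b - a))) with (- INR (b - a)) by (rewrite plus_INR; ring).
    rewrite Rabs_Ropp, (Rabs_pos_eq (INR (b - a))) by apply pos_INR. apply Hd; auto.
  - replace a with (b + (a - b))%nat by lia.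
    replace (INR (b + (a - b)) - INR b) with (INR (a - b)) by (rewrite plus_INR; ring).
    rewrite (Rabs_pos_eq (INR (a - b))) by apply pos_INR. apply Hd; auto.
Qed.

Fixpoint sm (f : nat -> R) (n : nat) : R :=
  match n with O => 0 | S n' => f (S n') + sm f n' end.

Lemma upd_same w k a b : upd (upd w k a) k b = upd w k b.
Proof. apply functional_extensionality; intro i; unfold upd; destruct (Nat.eqb i k); auto. Qed.

Lemma upd_comm w k k' a b : k <> k' -> upd (upd w k a) k' b = upd (upd w k' b) k a.
Proof.
  intro H; apply functional_extensionality; intro i; unfold upd.
  destruct (Nat.eqb_spec i k'), (Nat.eqb_spec i k); subst; auto; congruence.
Qed.

Lemma upd_eq w k b : upd w k b k = b.
Proof. unfold upd; rewrite Nat.eqb_refl; auto. Qed.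

Lemma upd_neq w k b i : i <> k -> upd w k b i = w i.
Proof. intro H; unfold upd; destruct (Nat.eqb_spec i k); auto; congruence. Qed.

Section BE.
Variable p : R.

Lemma be_ext m F G : (forall w, F w = G w) -> bern_expect p m F = bern_expect p m G.
Proof. intros H; f_equal; apply functional_extensionality; auto. Qed.

Lemma be_const m c : bern_expect p m (fun _ => c) = c.
Proof. induction m; simpl; auto. rewrite IHm; ring. Qed.

Lemma be_plus m F G : bern_expect p m (fun w => F w + G w) = bern_expect p m F + bern_expect p m G.
Proof.
  revert F G; induction m; intros; simpl; auto.
  rewrite (IHm (fun w => F (upd w (S m) true)) (fun w => G (upd w (S m) true))).
  rewrite (IHm (fun w => F (upd w (S m) false)) (fun w => G (upd w (S m) false))). ring.
Qed.

Lemma be_scal m c F : bern_expect p m (fun w => c * F w) = c * bern_expect p m F.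
Proof.
  revert F; induction m; intros; simpl; auto.
  rewrite (IHm (fun w => F (upd w (S m) true))).
  rewrite (IHm (fun w => F (upd w (S m) false))). ring.
Qed.

Lemma be_minus m F G : bern_expect p m (fun w => F w - G w) = bern_expect p m F - bern_expect p m G.
Proof.
  rewrite (be_ext m _ (fun w => F w + (-1) * G w)) by (intros; ring).
  rewrite be_plus, be_scal; ring.
Qed.

Lemma be_sm m n (F : nat -> (nat -> bool) -> R) :
  bern_expect p m (fun w => sm (fun l => F l w) n) = sm (fun l => bern_expect p m (F l)) n.
Proof.
  induction n; simpl. apply be_const.
  rewrite be_plus, IHn; auto.
Qed.

Hypothesis Hp : 0 <= p <= 1.

Lemma be_mono m F G : (forall w, F w <= G w) -> bern_expect p m F <= bern_expect p m G.
Proof.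
  revert F G; induction m; intros F G H; simpl; auto.
  pose proof (IHm (fun w => F (upd w (S m) true)) (fun w => G (upd w (S m) true)) ltac:(intros; apply H)).
  pose proof (IHm (fun w => F (upd w (S m) false)) (fun w => G (upd w (S m) false)) ltac:(intros; apply H)).
  nra.
Qed.

Lemma be_abs m F : Rabs (bern_expect p m F) <= bern_expect p m (fun w => Rabs (F w)).
Proof.
  apply Rabs_le. split.
  - replace (- bern_expect p m (fun w => Rabs (F w))) with ((-1) * bern_expect p m (fun w => Rabs (F w))) by ring.
    rewrite <- be_scal. apply be_mono. intros w.
    pose proof (Rle_abs (- F w)). rewrite Rabs_Ropp in H. lra.
  - apply be_mono. intros; apply Rle_abs.
Qed.

Lemma be_coord m k F : (1 <= k <= m)%nat ->
  bern_expect p m (fun w => if w k then F w else 0) = p * bern_expect p m (fun w => F (upd w k true)).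
Proof.
  revert F; induction m; intros F Hk; [lia|]. simpl.
  destruct (Nat.eq_dec k (S m)) as [->|Hne].
  - rewrite (be_ext m (fun w => if upd w (S m) true (S m) then F (upd w (S m) true) else 0) (fun w => F (upd w (S m) true)))
      by (intros; rewrite upd_eq; auto).
    rewrite (be_ext m (fun w => if upd w (S m) false (S m) then F (upd w (S m) false) else 0) (fun w => 0))
      by (intros; rewrite upd_eq; auto).
    rewrite (be_ext m (fun w => F (upd (upd w (S m) true) (S m) true)) (fun w => F (upd w (S m) true)))
      by (intros; rewrite upd_same; auto).
    rewrite (be_ext m (fun w => F (upd (upd w (S m) false) (S m) true)) (fun w => F (upd w (S m) true)))
      by (intros; rewrite upd_same; auto).
    rewrite be_const. ring.
  - assert (Hk' : (1 <= k <= m)%nat) by lia.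
    rewrite (be_ext m (fun w => if upd w (S m) true k then F (upd w (S m) true) else 0)
                      (fun w => if w k then F (upd w (S m) true) else 0))
      by (intros; rewrite upd_neq; auto).
    rewrite (be_ext m (fun w => if upd w (S m) false k then F (upd w (S m) false) else 0)
                      (fun w => if w k then F (upd w (S m) false) else 0))
      by (intros; rewrite upd_neq; auto).
    rewrite (IHm (fun w => F (upd w (S m) true)) Hk').
    rewrite (IHm (fun w => F (upd w (S m) false)) Hk').
    rewrite (be_ext m (fun w => F (upd (upd w (S m) true) k true)) (fun w => F (upd (upd w k true) (S m) true)))
      by (intros; rewrite upd_comm; auto).
    rewrite (be_ext m (fun w => F (upd (upd w (S m) false) k true)) (fun w => F (upd (upd w k true) (S m) false)))
      by (intros; rewrite upd_comm; auto).
    ring.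
Qed.

End BE.

Fixpoint sj (f : nat -> R) (k : nat) : R :=
  match k with O => 0 | S k' => f k' + sj f k' end.

Lemma sm_plus f g n : sm (fun l => f l + g l) n = sm f n + sm g n.
Proof. induction n; simpl; [ring|]. rewrite IHn; ring. Qed.
Lemma sj_plus f g n : sj (fun l => f l + g l) n = sj f n + sj g n.
Proof. induction n; simpl; [ring|]. rewrite IHn; ring. Qed.
Lemma sm_ext f g n : (forall l, (1 <= l <= n)%nat -> f l = g l) -> sm f n = sm g n.
Proof. induction n; intros H; simpl; auto. rewrite (H (S n)), IHn; auto; try lia; intros; apply H; lia. Qed.
Lemma sm_mono f g n : (forall l, (1 <= l <= n)%nat -> f l <= g l) -> sm f n <= sm g n.
Proof. induction n; intros H; simpl; [lra|]. pose proof (H (S n) ltac:(lia)). pose proof (IHn ltac:(intros; apply H; lia)). lra. Qed.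
Lemma sj_mono f g n : (forall l, (l < n)%nat -> f l <= g l) -> sj f n <= sj g n.
Proof. induction n; intros H; simpl; [lra|]. pose proof (H n ltac:(lia)). pose proof (IHn ltac:(intros; apply H; lia)). lra. Qed.
Lemma sm_const c n : sm (fun _ => c) n = INR n * c.
Proof. induction n; simpl sm; [simpl; ring|]. rewrite IHn, S_INR; ring. Qed.
Lemma sj_const c n : sj (fun _ => c) n = INR n * c.
Proof. induction n; simpl sj; [simpl; ring|]. rewrite IHn, S_INR; ring. Qed.
Lemma sm_scal c f n : sm (fun l => c * f l) n = c * sm f n.
Proof. induction n; simpl; [ring|]. rewrite IHn; ring. Qed.
Lemma sm_nonneg f n : (forall l, (1 <= l <= n)%nat -> 0 <= f l) -> 0 <= sm f n.
Proof. intros H. rewrite <- (Rmult_0_r (INR n)), <- sm_const. apply sm_mono; auto. Qed.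
Lemma sj_nonneg f n : (forall l, (l < n)%nat -> 0 <= f l) -> 0 <= sj f n.
Proof. intros H. rewrite <- (Rmult_0_r (INR n)), <- sj_const. apply sj_mono; auto. Qed.
Lemma sm_ge_term f n l : (1 <= l <= n)%nat -> (forall l, (1 <= l <= n)%nat -> 0 <= f l) -> f l <= sm f n.
Proof.
  induction n; intros Hl H; [lia|]. simpl.
  destruct (Nat.eq_dec l (S n)) as [->|Hne].
  - pose proof (sm_nonneg f n ltac:(intros; apply H; lia)); lra.
  - pose proof (IHn ltac:(lia) ltac:(intros; apply H; lia)). pose proof (H (S n) ltac:(lia)). lra.
Qed.
Lemma sj_ge_term f n l : (l < n)%nat -> (forall l, (l < n)%nat -> 0 <= f l) -> f l <= sj f n.
Proof.
  induction n; intros Hl H; [lia|]. simpl.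
  destruct (Nat.eq_dec l n) as [->|Hne].
  - pose proof (sj_nonneg f n ltac:(intros; apply H; lia)); lra.
  - pose proof (IHn ltac:(lia) ltac:(intros; apply H; lia)). pose proof (H n ltac:(lia)). lra.
Qed.
Lemma sm_sj_swap (f : nat -> nat -> R) n k :
  sm (fun l => sj (fun j => f j l) k) n = sj (fun j => sm (fun l => f j l) n) k.
Proof.
  induction k; simpl. rewrite sm_const; ring.
  rewrite sm_plus, IHk; reflexivity.
Qed.
Lemma sm_S f n : sm f (S n) = f (S n) + sm f n.
Proof. reflexivity. Qed.
Lemma sm_delta c n l : (1 <= l <= n)%nat -> sm (fun l' => if Nat.eqb l' l then c else 0) n = c.
Proof.
  induction n; intros Hl; [lia|]. rewrite sm_S. cbv beta.
  destruct (Nat.eqb_spec (S n) l).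
  - subst. rewrite (sm_ext _ (fun _ => 0)). rewrite sm_const; ring.
    intros l' Hl'. destruct (Nat.eqb_spec l' (S n)); [lia|auto].
  - rewrite IHn by lia; ring.
Qed.
Lemma sm_abs f n : Rabs (sm f n) <= sm (fun l => Rabs (f l)) n.
Proof. induction n; simpl. rewrite Rabs_R0; lra. eapply Rle_trans; [apply Rabs_triang|]. lra. Qed.

Fixpoint setc (q : nat -> nat -> nat) (l k : nat) (w : nat -> bool) : nat -> bool :=
  match k with O => w | S k' => upd (setc q l k' w) (q k' l) true end.

Lemma setc_val q l k w i : (forall j, (j < k)%nat -> q j l <> i) -> setc q l k w i = w i.
Proof.
  induction k; intros H; simpl; auto. rewrite upd_neq. apply IHk; intros; apply H; lia.
  intro e; apply (H k); auto.
Qed.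

Lemma setc_true q l k w j : (j < k)%nat -> setc q l k w (q j l) = true.
Proof.
  induction k; intros H; [lia|]. simpl. destruct (Nat.eq_dec (q j l) (q k l)) as [e|e].
  - rewrite e, upd_eq; auto.
  - rewrite upd_neq by auto. apply IHk. destruct (Nat.eq_dec j k); subst; [congruence|lia].
Qed.

Lemma setc_ge q l k w i : w i = true -> setc q l k w i = true.
Proof.
  induction k; intros H; simpl; auto. unfold upd. destruct (Nat.eqb i (q k l)); auto.
Qed.

Lemma prod_xi_ext w w' q l k : (forall j, (j < k)%nat -> w' (q j l) = w (q j l)) ->
  prod_xi w' q l k = prod_xi w q l k.
Proof.
  induction k; intros H; simpl; auto. rewrite H, IHk; auto.
Qed.

Lemma prod_xi_01 w q l k : prod_xi w q l k = 0%nat \/ prod_xi w q l k = 1%nat.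
Proof.
  induction k; simpl; auto. unfold b2n; destruct (w (q k l)); lia.
Qed.

Lemma prod_xi_le_factor w q l k j : (j < k)%nat -> (prod_xi w q l k <= b2n (w (q j l)))%nat.
Proof.
  induction k; intros H; [lia|]. simpl.
  destruct (Nat.eq_dec j k) as [->|ne].
  - destruct (prod_xi_01 w q l k) as [e|e]; rewrite e; lia.
  - pose proof (IHk ltac:(lia)). unfold b2n at 1; destruct (w (q k l)); lia.
Qed.

Lemma prod_xi_mono w w' q l k : (forall i, w i = true -> w' i = true) ->
  (prod_xi w q l k <= prod_xi w' q l k)%nat.
Proof.
  intros H; induction k; simpl; auto.
  unfold b2n. destruct (w (q k l)) eqn:E1.
  - rewrite (H _ E1). lia.
  - lia.
Qed.

Lemma prod_xi_setc w q l k : prod_xi (setc q l k w) q l k = 1%nat.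
Proof.
  assert (forall k', (k' <= k)%nat -> prod_xi (setc q l k w) q l k' = 1%nat).
  { induction k'; intros H; simpl; auto. rewrite setc_true by lia. rewrite IHk' by lia. reflexivity. }
  apply H; lia.
Qed.

Lemma S_sum_sm w q ell n : INR (S_sum w q ell n) = sm (fun l => INR (prod_xi w q l ell)) n.
Proof. induction n; simpl S_sum; simpl sm; auto. rewrite plus_INR, IHn; auto. Qed.

Lemma S_sum_ge w q ell n l : (1 <= l <= n)%nat -> (prod_xi w q l ell <= S_sum w q ell n)%nat.
Proof.
  induction n; intros H; [lia|]. simpl. destruct (Nat.eq_dec l (S n)) as [->|ne]; [lia|].
  pose proof (IHn ltac:(lia)); lia.
Qed.

Section Main.
Variables (ell : nat) (q : nat -> nat -> nat).
Hypothesis Hell : (1 <= ell)%nat.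
Hypothesis Hq_incr : forall j l, (j < ell)%nat -> (1 <= l)%nat -> (q j l < q j (S l))%nat.
Hypothesis Hq_first : forall l, (1 <= l)%nat -> (l <= q 0%nat l)%nat.
Hypothesis Hq_order : forall j l, (S j < ell)%nat -> (1 <= l)%nat -> (q j l < q (S j) l)%nat.

Lemma q_mono_j j j' l : (1 <= l)%nat -> (j < j')%nat -> (j' < ell)%nat -> (q j l < q j' l)%nat.
Proof.
  intros Hl Hj Hj'. induction j'; [lia|].
  destruct (Nat.eq_dec j j') as [->|ne]. apply Hq_order; lia.
  pose proof (IHj' ltac:(lia) ltac:(lia)). pose proof (Hq_order j' l ltac:(lia) Hl). lia.
Qed.

Lemma q_mono_l j l l' : (j < ell)%nat -> (1 <= l)%nat -> (l < l')%nat -> (q j l < q j l')%nat.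
Proof.
  intros Hj Hl Hll. induction l'; [lia|].
  destruct (Nat.eq_dec l l') as [->|ne]. apply Hq_incr; lia.
  pose proof (IHl' ltac:(lia)). pose proof (Hq_incr j l' Hj ltac:(lia)). lia.
Qed.

Lemma q_range j l n : (j < ell)%nat -> (1 <= l <= n)%nat -> (1 <= q j l <= q (ell - 1) n)%nat.
Proof.
  intros Hj Hl. split.
  - pose proof (Hq_first l ltac:(lia)).
    destruct j. lia. pose proof (q_mono_j 0 (S j) l ltac:(lia) ltac:(lia) Hj). lia.
  - assert (q j l <= q j n)%nat.
    { destruct (Nat.eq_dec l n) as [->|ne]; [lia|]. pose proof (q_mono_l j l n Hj ltac:(lia) ltac:(lia)); lia. }
    destruct (Nat.eq_dec j (ell - 1)) as [e|ne]. rewrite <- e; auto.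
    pose proof (q_mono_j j (ell - 1) n ltac:(lia) ltac:(lia) ltac:(lia)). lia.
Qed.

Variable p : R.
Hypothesis Hp : 0 < p < 1.
Variable n : nat.
Hypothesis Hn : (1 <= n)%nat.

Let m := q (ell - 1) n.
Let E := bern_expect p m.
Let X (w : nat -> bool) (l : nat) := INR (prod_xi w q l ell).

Lemma size_bias l h : (1 <= l <= n)%nat ->
  E (fun w => X w l * h w) = p ^ ell * E (fun w => h (setc q l ell w)).
Proof.
  intros Hl. unfold X, E.
  assert (forall k, (k <= ell)%nat -> forall h,
    bern_expect p m (fun w => INR (prod_xi w q l k) * h w) = p ^ k * bern_expect p m (fun w => h (setc q l k w))).
  { induction k; intros Hk h0.
    - simpl. rewrite (be_ext p m _ h0) by (intros; simpl; apply Rmult_1_l). rewrite Rmult_1_l; reflexivity.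
    - rewrite (be_ext p m _ (fun w => if w (q k l) then INR (prod_xi w q l k) * h0 w else 0)).
      2:{ intros w; simpl. unfold b2n; destruct (w (q k l)); rewrite ?mult_INR; simpl; ring. }
      rewrite be_coord. 2:{ pose proof (q_range k l n ltac:(lia) Hl). unfold m; lia. }
      rewrite (be_ext p m _ (fun w => INR (prod_xi w q l k) * h0 (upd w (q k l) true))).
      2:{ intros w. rewrite (prod_xi_ext w); auto. intros j Hj. apply upd_neq.
          pose proof (q_mono_j j k l ltac:(lia) Hj ltac:(lia)). lia. }
      rewrite IHk by lia. simpl. ring. }
  apply H; lia.
Qed.

Lemma EX l : (1 <= l <= n)%nat -> E (fun w => X w l) = p ^ ell.
Proof.
  intros Hl. rewrite (be_ext p m _ (fun w => X w l * 1)) by (intros; ring).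
  fold E. rewrite size_bias by auto. unfold E; rewrite be_const; ring.
Qed.

Lemma E_coord c : (1 <= c <= m)%nat -> E (fun w => INR (b2n (w c))) = p.
Proof.
  intros Hc. unfold E. rewrite (be_ext p m _ (fun w => if w c then 1 else 0)).
  2:{ intros w; unfold b2n; destruct (w c); simpl; auto. }
  rewrite be_coord by auto. rewrite be_const; ring.
Qed.

Definition Nll (l l' : nat) : R :=
  sj (fun j => sj (fun j' => if Nat.eqb (q j' l') (q j l) then 1 else 0) ell) ell.

Lemma Nll_nonneg l l' : 0 <= Nll l l'.
Proof.
  unfold Nll. apply sj_nonneg; intros; apply sj_nonneg; intros. destruct (Nat.eqb _ _); lra.
Qed.

Lemma diff_bound l l' : (1 <= l <= n)%nat -> (1 <= l' <= n)%nat -> l <> l' ->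
  E (fun w => X (setc q l ell w) l' - X w l') <= p * Nll l l'.
Proof.
  intros Hl Hl' Hne.
  destruct (Classical_Prop.classic (exists j j', (j < ell)%nat /\ (j' < ell)%nat /\ q j' l' = q j l)) as [Hex|Hnex].
  - destruct Hex as (j & j' & Hj & Hj' & Heq).
    assert (HN : 1 <= Nll l l').
    { unfold Nll. eapply Rle_trans; [|apply (sj_ge_term _ ell j Hj)].
      2:{ intros; apply sj_nonneg; intros; destruct (Nat.eqb _ _); lra. }
      eapply Rle_trans; [|apply (sj_ge_term _ ell j' Hj')].
      2:{ intros; destruct (Nat.eqb _ _); lra. }
      cbv beta. rewrite Heq, Nat.eqb_refl; lra. }
    assert (Hc : exists c, (c < ell)%nat /\ forall j0, (j0 < ell)%nat -> q j0 l <> q c l').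
    { destruct (Nat.lt_total l' l) as [h|[h|h]]; [|lia|].
      - exists 0%nat. split; [lia|]. intros j0 Hj0.
        pose proof (q_mono_l 0 l' l ltac:(lia) ltac:(lia) h).
        destruct j0; [lia|]. pose proof (q_mono_j 0 (S j0) l ltac:(lia) ltac:(lia) Hj0). lia.
      - exists (ell - 1)%nat. split; [lia|]. intros j0 Hj0.
        pose proof (q_mono_l (ell - 1) l l' ltac:(lia) ltac:(lia) ltac:(lia)).
        destruct (Nat.eq_dec j0 (ell - 1)) as [->|nn]; [lia|].
        pose proof (q_mono_j j0 (ell - 1) l ltac:(lia) ltac:(lia) ltac:(lia)). lia. }
    destruct Hc as (c & Hc & Hcn).
    assert (H1 : E (fun w => X (setc q l ell w) l') <= p).
    { rewrite <- (E_coord (q c l')). 2:{ pose proof (q_range c l' n Hc Hl'). unfold m; lia. }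
      unfold E; apply be_mono; [lra|]. intros w. unfold X. apply le_INR.
      rewrite <- (setc_val q l ell w (q c l')) by (intros j0 Hj0; apply Hcn; auto).
      apply prod_xi_le_factor; auto. }
    assert (H2 : 0 <= E (fun w => X w l')).
    { unfold E. rewrite <- (be_const p m 0). apply be_mono; [lra|]. intros; apply pos_INR. }
    unfold E; rewrite be_minus. fold E. nra.
  - unfold E. rewrite (be_ext p m _ (fun _ => 0)).
    2:{ intros w. unfold X. rewrite (prod_xi_ext w (setc q l ell w)). ring.
        intros j' Hj'. apply setc_val. intros j Hj e. apply Hnex. exists j, j'. auto. }
    rewrite be_const. pose proof (Nll_nonneg l l'). nra.
Qed.

Lemma count_inj j c : (j < ell)%nat ->
  sm (fun l' => if Nat.eqb (q j l') c then 1 else 0) n <= 1.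
Proof.
  intros Hj.
  assert (Z : forall k, (forall l', (1 <= l' <= k)%nat -> q j l' <> c) ->
     sm (fun l' => if Nat.eqb (q j l') c then 1 else 0) k = 0).
  { intros k Hk. rewrite (sm_ext _ (fun _ => 0)). rewrite sm_const; ring.
    intros l' Hl'. destruct (Nat.eqb_spec (q j l') c); auto. exfalso; apply (Hk l'); auto. }
  clear Hn. induction n as [|k IH]; simpl; [lra|].
  destruct (Nat.eqb_spec (q j (S k)) c).
  - rewrite Z. lra. intros l' Hl' e'. pose proof (q_mono_l j l' (S k) Hj ltac:(lia) ltac:(lia)). lia.
  - lra.
Qed.

Lemma sum_Nll l : sm (fun l' => Nll l l') n <= INR ell * INR ell.
Proof.
  unfold Nll. rewrite sm_sj_swap.
  rewrite <- sj_const. apply sj_mono. intros j Hj.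
  rewrite sm_sj_swap. rewrite <- (Rmult_1_r (INR ell)), <- sj_const. apply sj_mono. intros j' Hj'.
  apply count_inj; auto.
Qed.

Lemma abs_bound l : (1 <= l <= n)%nat ->
  E (fun w => Rabs (1 + INR (S_sum w q ell n) - INR (S_sum (setc q l ell w) q ell n)))
  <= p ^ ell + INR ell * INR ell * p.
Proof.
  intros Hl.
  set (D := fun w => sm (fun l' => X (setc q l ell w) l' - X w l') n).
  assert (HD : forall w, 1 + INR (S_sum w q ell n) - INR (S_sum (setc q l ell w) q ell n) = 1 - D w).
  { intros w. unfold D. rewrite !S_sum_sm.
    assert (forall f g k, sm (fun l => f l - g l) k = sm f k - sm g k).
    { intros f g k; induction k; simpl; [ring|]. rewrite IHk; ring. }
    rewrite H. unfold X. ring. }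
  assert (Hpt : forall w, Rabs (1 + INR (S_sum w q ell n) - INR (S_sum (setc q l ell w) q ell n)) <= D w - 1 + 2 * X w l).
  { intros w. rewrite HD.
    assert (Hnn : forall l', (1 <= l' <= n)%nat -> 0 <= X (setc q l ell w) l' - X w l').
    { intros l' _. unfold X. assert (prod_xi w q l' ell <= prod_xi (setc q l ell w) q l' ell)%nat.
      { apply prod_xi_mono. intros; apply setc_ge; auto. }
      apply le_INR in H. lra. }
    assert (Ht : X (setc q l ell w) l - X w l <= D w)
      by (unfold D; apply (sm_ge_term (fun l' => X (setc q l ell w) l' - X w l')); auto).
    assert (H0 : 0 <= D w) by (unfold D; apply sm_nonneg; auto).
    unfold X at 1 in Ht. rewrite prod_xi_setc in Ht. simpl INR in Ht.
    destruct (prod_xi_01 w q l ell) as [e|e]; unfold X in *; rewrite e in *; simpl INR in *.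
    - rewrite Rabs_minus_sym, Rabs_pos_eq; lra.
    - apply Rabs_le; lra. }
  eapply Rle_trans. apply be_mono; [lra|]. apply Hpt.
  rewrite be_plus, be_minus, be_scal, be_const. unfold D. rewrite be_sm. fold E.
  rewrite (EX l Hl).
  assert (Hs : sm (fun l0 => E (fun w => X (setc q l ell w) l0 - X w l0)) n
              <= sm (fun l' => (if Nat.eqb l' l then 1 - p ^ ell else 0) + p * Nll l l') n).
  { apply sm_mono. intros l' Hl'. destruct (Nat.eqb_spec l' l) as [->|ne].
    - unfold E; rewrite be_minus. fold E. rewrite (EX l Hl).
      rewrite (be_ext p m _ (fun _ => 1)). unfold E; rewrite be_const. pose proof (Nll_nonneg l l). pose proof Hp. nra.
      intros w; unfold X; rewrite prod_xi_setc; reflexivity.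
    - pose proof (diff_bound l l' Hl Hl' ltac:(auto)). lra. }
  rewrite sm_plus, sm_delta in Hs by auto. rewrite sm_scal in Hs.
    pose proof (sum_Nll l). assert (p * sm (fun l' => Nll l l') n <= p * (INR ell * INR ell)) by (apply Rmult_le_compat_l; lra).
  change (sm (fun l' => Nll l l') n) with (sm (Nll l) n) in *. lra.
Qed.


Lemma stein_main G L : infinite_sum (poisson_term (INR n * p ^ ell) G) L ->
  Rabs (prob_Sn_in p q ell n G - L) <= p ^ ell + INR ell * INR ell * p.
Proof.
  intros HL.
  set (mu := INR n * p ^ ell).
  assert (Hmu : 0 < mu).
  { unfold mu. apply Rmult_lt_0_compat. apply lt_0_INR; lia. apply pow_lt; lra. }
  set (g := gS mu G L).
  set (W := fun w => S_sum w q ell n).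
  assert (E1 : prob_Sn_in p q ell n G - L =
     E (fun w => mu * g (S (W w)) - INR (W w) * g (W w))).
  { unfold prob_Sn_in, E. fold m.
    rewrite (be_ext p m (fun w => mu * g (S (W w)) - INR (W w) * g (W w))
                       (fun w => (if G (W w) then 1 else 0) - L)).
    unfold E; rewrite be_minus, be_const; reflexivity.
    intros w; unfold g; rewrite stein_eq; auto. }
  assert (E2 : E (fun w => mu * g (S (W w)) - INR (W w) * g (W w))
     = sm (fun l => p ^ ell * E (fun w => g (S (W w)) - g (W (setc q l ell w)))) n).
  { unfold E. rewrite be_minus.
    rewrite (be_ext p m (fun w => INR (W w) * g (W w)) (fun w => sm (fun l => X w l * g (W w)) n)).
    2:{ intros w. unfold W at 1. rewrite S_sum_sm. rewrite Rmult_comm, <- sm_scal.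
        apply sm_ext; intros; unfold X; ring. }
    rewrite be_sm.
    rewrite (sm_ext (fun l => bern_expect p m (fun w => X w l * g (W w))) (fun l => p ^ ell * bern_expect p m (fun w => g (W (setc q l ell w))))).
    2:{ intros l Hl. apply size_bias; auto. }
    rewrite be_scal. unfold mu.
    rewrite (sm_ext (fun l => p ^ ell * bern_expect p m (fun w => g (S (W w)) - g (W (setc q l ell w))))
                    (fun l => p ^ ell * bern_expect p m (fun w => g (S (W w))) + (-1) * (p ^ ell * bern_expect p m (fun w => g (W (setc q l ell w)))))).
    2:{ intros; rewrite be_minus; ring. }
    rewrite sm_plus, sm_const, (sm_scal (-1)), (sm_scal (p ^ ell)). ring. }
  rewrite E1, E2.
  eapply Rle_trans; [apply sm_abs|].
  eapply Rle_trans.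
  { apply (sm_mono _ (fun l => p ^ ell * ((p ^ ell + INR ell * INR ell * p) / mu))).
    intros l Hl. rewrite Rabs_mult, (Rabs_pos_eq (p ^ ell)) by (apply pow_le; lra).
    apply Rmult_le_compat_l; [apply pow_le; lra|].
    eapply Rle_trans; [apply be_abs; lra|].
    eapply Rle_trans.
    { apply (be_mono p) with (G := fun w => Rabs (1 + INR (S_sum w q ell n) - INR (S_sum (setc q l ell w) q ell n)) / mu); [lra|].
      intros w. unfold g. eapply Rle_trans; [apply g_lip; auto|].
      - lia.
      - unfold W. pose proof (S_sum_ge (setc q l ell w) q ell n l Hl). rewrite prod_xi_setc in H. lia.
      - unfold W. rewrite S_INR. unfold Rdiv. right. f_equal. f_equal. ring. }
    unfold Rdiv. rewrite (be_ext p m _ (fun w => / mu * Rabs (1 + INR (S_sum w q ell n) - INR (S_sum (setc q l ell w) q ell n)))) by (intros; ring).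
    rewrite be_scal. fold E. rewrite Rmult_comm. apply Rmult_le_compat_r.
    left; apply Rinv_0_lt_compat; auto. apply abs_bound; auto. }
  rewrite sm_const. unfold mu. right. field. split.
  apply pow_nonzero; lra. apply not_0_INR; lia.
Qed.

End Main.

Lemma exp_le x y : x <= y -> exp x <= exp y.
Proof. intros [h|h]; [left; apply exp_increasing; auto| subst; lra]. Qed.

Lemma exp_diff a b : 0 <= a -> 0 <= b -> Rabs (exp (- a) - exp (- b)) <= Rabs (a - b).
Proof.
  assert (K : forall a b, 0 <= a <= b -> exp (-a) - exp (-b) <= b - a /\ 0 <= exp (-a) - exp (-b)).
  { intros a0 b0 [H1 H2].
    assert (exp (- b0) = exp (- a0) * exp (- (b0 - a0))) by (rewrite <- exp_plus; f_equal; ring).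
    pose proof (exp_ineq1_le (- (b0 - a0))).
    assert (exp (- a0) <= 1) by (rewrite <- exp_0; apply exp_le; lra).
    pose proof (exp_pos (- a0)). pose proof (exp_pos (- (b0 - a0))).
    assert (exp (- (b0 - a0)) <= 1) by (rewrite <- exp_0; apply exp_le; lra).
    split; nra. }
  intros Ha Hb. destruct (Rle_dec a b).
  - destruct (K a b) as [h1 h2]; [lra|]. rewrite Rabs_pos_eq by lra. rewrite Rabs_minus_sym, Rabs_pos_eq; lra.
  - destruct (K b a) as [h1 h2]; [lra|]. rewrite Rabs_minus_sym, Rabs_pos_eq by lra. rewrite Rabs_pos_eq; lra.
Qed.

Lemma pow_diff a b M k : 0 <= a <= M -> 0 <= b <= M ->
  Rabs (a ^ S k - b ^ S k) <= INR (S k) * Rabs (a - b) * M ^ k.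
Proof.
  intros Ha Hb. induction k.
  - simpl. rewrite !Rmult_1_r. lra.
  - replace (a ^ S (S k) - b ^ S (S k)) with (a * (a ^ S k - b ^ S k) + b ^ S k * (a - b)) by (simpl; ring).
    eapply Rle_trans; [apply Rabs_triang|]. rewrite !Rabs_mult.
    rewrite (Rabs_pos_eq a), (Rabs_pos_eq (b ^ S k)) by (try apply pow_le; lra).
    assert (b ^ S k <= M ^ S k) by (apply pow_incr; lra).
    pose proof (Rabs_pos (a - b)). pose proof (Rabs_pos (a ^ S k - b ^ S k)).
    assert (0 <= M ^ k) by (apply pow_le; lra).
    assert (a * Rabs (a ^ S k - b ^ S k) <= M * (INR (S k) * Rabs (a - b) * M ^ k)).
    { apply Rmult_le_compat; lra. }
    rewrite (S_INR (S k)). simpl pow in *. nra.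
Qed.

Definition ex (M : R) (k : nat) : R := M ^ k / INR (fact k).
Definition exs (M : R) (k : nat) : R := match k with O => 0 | S j => ex M j end.

Lemma pi_diff a b k : 0 <= a -> 0 <= b ->
  Rabs (pi_ a k - pi_ b k) <= Rabs (a - b) * (ex (Rmax a b) k + exs (Rmax a b) k).
Proof.
  intros Ha Hb. set (M := Rmax a b).
  assert (HaM : a <= M) by apply Rmax_l. assert (HbM : b <= M) by apply Rmax_r.
  unfold pi_, ex, exs.
  replace (exp (- a) * a ^ k / INR (fact k) - exp (- b) * b ^ k / INR (fact k))
    with (((exp (- a) - exp (- b)) * a ^ k + exp (- b) * (a ^ k - b ^ k)) / INR (fact k))
    by (field; apply INR_fact_neq_0).
  pose proof (INR_fact_lt_0 k).
  unfold Rdiv. rewrite Rabs_mult, (Rabs_pos_eq (/ _)) by (left; apply Rinv_0_lt_compat; auto).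
  assert (H1 : Rabs ((exp (- a) - exp (- b)) * a ^ k) <= Rabs (a - b) * M ^ k).
  { rewrite Rabs_mult, (Rabs_pos_eq (a ^ k)) by (apply pow_le; auto).
    apply Rmult_le_compat; try apply Rabs_pos; [apply pow_le; auto| |apply pow_incr; lra].
    apply exp_diff; auto. }
  assert (H2 : Rabs (exp (- b) * (a ^ k - b ^ k)) <= Rabs (a ^ k - b ^ k)).
  { rewrite Rabs_mult, (Rabs_pos_eq (exp _)) by (left; apply exp_pos).
    assert (exp (- b) <= 1) by (rewrite <- exp_0; apply exp_le; lra).
    pose proof (Rabs_pos (a ^ k - b ^ k)). nra. }
  pose proof (Rabs_triang ((exp (- a) - exp (- b)) * a ^ k) (exp (- b) * (a ^ k - b ^ k))).
  assert (0 < / INR (fact k)) by (apply Rinv_0_lt_compat; auto).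
  destruct k as [|j].
  - simpl in *. rewrite Rminus_diag, Rabs_R0 in H2. rewrite Rinv_1 in *. replace (1 - 1) with 0 in * by ring. lra.
  - pose proof (pow_diff a b M j ltac:(lra) ltac:(lra)).
    assert (E : INR (S j) * Rabs (a - b) * M ^ j * / INR (fact (S j)) = Rabs (a - b) * (M ^ j / INR (fact j))).
    { rewrite fact_simpl, mult_INR. field. split. apply INR_fact_neq_0. apply not_0_INR; lia. }
    assert (H6 : Rabs ((exp (- a) - exp (- b)) * a ^ S j + exp (- b) * (a ^ S j - b ^ S j)) * / INR (fact (S j))
      <= (Rabs (a - b) * M ^ S j + INR (S j) * Rabs (a - b) * M ^ j) * / INR (fact (S j))).
    { apply Rmult_le_compat_r; lra. }
    rewrite Rmult_plus_distr_r, E in H6. unfold ex. unfold Rdiv in *. lra.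
Qed.

Lemma ex_sum_le M N : 0 <= M -> sum_f_R0 (ex M) N <= exp M.
Proof.
  intros HM. pose proof (exp_series M).
  rewrite (sum_eq _ (fun i => / INR (fact i) * M ^ i)) by (intros; unfold ex, Rdiv; ring).
  apply sum_incr; auto. intros; apply Rmult_le_pos; [left; apply Rinv_0_lt_compat, INR_fact_lt_0|apply pow_le; auto].
Qed.

Lemma ex_nonneg M k : 0 <= M -> 0 <= ex M k.
Proof. intros; unfold ex, Rdiv; apply Rmult_le_pos; [apply pow_le; auto| left; apply Rinv_0_lt_compat, INR_fact_lt_0]. Qed.

Lemma exs_sum_le M N : 0 <= M -> sum_f_R0 (exs M) N <= exp M.
Proof.
  intros HM. assert (forall N, sum_f_R0 (exs M) N <= sum_f_R0 (ex M) N).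
  { assert (E : forall N, sum_f_R0 (exs M) (S N) = sum_f_R0 (ex M) N).
    { induction N0; simpl; [ring|]. simpl in IHN0. rewrite IHN0. reflexivity. }
    intros [|N0]. simpl. unfold ex; simpl; lra.
    rewrite E, tech5. pose proof (ex_nonneg M (S N0) HM); lra. }
  eapply Rle_trans; [apply H|apply ex_sum_le; auto].
Qed.

Lemma pois_dist lam mu G La Lm : 0 < lam -> 0 < mu ->
  infinite_sum (poisson_term lam G) La -> infinite_sum (poisson_term mu G) Lm ->
  Rabs (Lm - La) <= 2 * Rabs (lam - mu) * exp (Rmax lam mu).
Proof.
  intros Hl Hm HLa HLm. set (M := Rmax lam mu).
  assert (HM : 0 <= M) by (unfold M; pose proof (Rmax_l lam mu); lra).
  assert (Hfin : forall N, Rabs (sA mu G N - sA lam G N) <= 2 * Rabs (lam - mu) * exp M).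
  { intros N. unfold sA.
    assert (forall N, Rabs (sum_f_R0 (poisson_term mu G) N - sum_f_R0 (poisson_term lam G) N)
          <= Rabs (lam - mu) * (sum_f_R0 (ex M) N + sum_f_R0 (exs M) N)).
    { induction N0.
      - simpl. unfold poisson_term. pose proof (pi_diff mu lam 0 ltac:(lra) ltac:(lra)).
        rewrite Rmax_comm in H. fold M in H. rewrite (Rabs_minus_sym mu lam) in H. fold (pi_ mu 0) (pi_ lam 0).
        destruct (G 0%nat); [change (exs M 0) with 0 in H; lra|]. rewrite Rminus_diag, Rabs_R0. apply Rmult_le_pos; [apply Rabs_pos|].
        pose proof (ex_nonneg M 0 HM); simpl; lra.
      - rewrite !tech5.
        replace (sum_f_R0 (poisson_term mu G) N0 + poisson_term mu G (S N0) - (sum_f_R0 (poisson_term lam G) N0 + poisson_term lam G (S N0)))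
          with ((sum_f_R0 (poisson_term mu G) N0 - sum_f_R0 (poisson_term lam G) N0) + (poisson_term mu G (S N0) - poisson_term lam G (S N0))) by ring.
        eapply Rle_trans; [apply Rabs_triang|].
        assert (Rabs (poisson_term mu G (S N0) - poisson_term lam G (S N0)) <= Rabs (lam - mu) * (ex M (S N0) + exs M (S N0))).
        { unfold poisson_term. fold (pi_ mu (S N0)) (pi_ lam (S N0)).
          pose proof (pi_diff mu lam (S N0) ltac:(lra) ltac:(lra)).
          rewrite Rmax_comm in H. fold M in H. rewrite (Rabs_minus_sym mu lam) in H.
          destruct (G (S N0)); [lra|]. rewrite Rminus_diag, Rabs_R0. apply Rmult_le_pos; [apply Rabs_pos|].
          pose proof (ex_nonneg M (S N0) HM). pose proof (ex_nonneg M N0 HM). simpl; lra. }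
        lra. }
    eapply Rle_trans; [apply H|].
    pose proof (ex_sum_le M N HM). pose proof (exs_sum_le M N HM). pose proof (Rabs_pos (lam - mu)). nra. }
  assert (Hcv : Un_cv (fun N => Rabs (sA mu G N - sA lam G N)) (Rabs (Lm - La))).
  { apply cv_cvabs. apply CV_minus; auto. }
  apply (lim_le_ev _ _ _ 0 Hcv). intros; apply Hfin.
Qed.

Theorem theorem2p1 (ell : nat) (q : nat -> nat -> nat) (p : nat -> R)
  (Hell : (1 <= ell)%nat)
  (Hq_incr : forall j l, (j < ell)%nat -> (1 <= l)%nat -> (q j l < q j (S l))%nat)
  (Hq_first : forall l, (1 <= l)%nat -> (l <= q 0%nat l)%nat)
  (Hq_order : forall j l, (S j < ell)%nat -> (1 <= l)%nat -> (q j l < q (S j) l)%nat)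
  (Hp : forall n, (1 <= n)%nat -> 0 < p n < 1) :
  (forall (lam : R), 0 < lam -> forall n : nat, (1 <= n)%nat ->
     forall Gamma : nat -> bool,
       exists L : R, infinite_sum (poisson_term lam Gamma) L /\
         Rabs (prob_Sn_in (p n) q ell n Gamma - L)
         <= (2 * INR ell ^ 2 + 1) * p n
            + 2 * Rabs (lam - INR n * p n ^ ell)
                * exp (Rmax lam (INR n * p n ^ ell)))
  /\
  (forall lam : R, 0 < lam ->
     Un_cv (fun n => INR n * p n ^ ell) lam ->
     forall eps : R, 0 < eps -> exists N : nat, forall n : nat, (N <= n)%nat ->
       (1 <= n)%nat ->
       forall (Gamma : nat -> bool) (L : R),
         infinite_sum (poisson_term lam Gamma) L ->
         Rabs (prob_Sn_in (p n) q ell n Gamma - L) < eps).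
Proof.
  assert (P1 : forall (lam : R), 0 < lam -> forall n : nat, (1 <= n)%nat ->
     forall Gamma : nat -> bool,
       exists L : R, infinite_sum (poisson_term lam Gamma) L /\
         Rabs (prob_Sn_in (p n) q ell n Gamma - L)
         <= (2 * INR ell ^ 2 + 1) * p n
            + 2 * Rabs (lam - INR n * p n ^ ell)
                * exp (Rmax lam (INR n * p n ^ ell))).
  { intros lam Hlam n Hn Gamma.
    pose proof (Hp n Hn) as Hpn.
    set (mu := INR n * p n ^ ell).
    assert (Hmu : 0 < mu).
    { unfold mu. apply Rmult_lt_0_compat. apply lt_0_INR; lia. apply pow_lt; lra. }
    destruct (poisson_exists lam Gamma Hlam) as [La HLa].
    destruct (poisson_exists mu Gamma Hmu) as [Lm HLm].
    exists La. split; auto.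
    pose proof (stein_main ell q Hell Hq_incr Hq_first Hq_order (p n) Hpn n Hn Gamma Lm HLm) as H1.
    pose proof (pois_dist lam mu Gamma La Lm Hlam Hmu HLa HLm) as H2.
    assert (Hpow : p n ^ ell <= p n).
    { replace ell with (S (ell - 1)) by lia. simpl. 
      assert (p n ^ (ell - 1) <= 1) by (rewrite <- (pow1 (ell - 1)); apply pow_incr; lra). pose proof (pow_le (p n) (ell - 1) ltac:(lra)). nra. }
    assert (HI : 0 <= INR ell * INR ell) by (apply Rmult_le_pos; apply pos_INR).
    replace (prob_Sn_in (p n) q ell n Gamma - La) with ((prob_Sn_in (p n) q ell n Gamma - Lm) + (Lm - La)) by ring.
    eapply Rle_trans; [apply Rabs_triang|]. simpl pow. nra. }
  split; auto.
  intros lam Hlam Hcv eps Heps.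
  set (c := 2 * INR ell ^ 2 + 1).
  assert (Hc : 0 < c) by (unfold c; pose proof (pow_le (INR ell) 2 (pos_INR ell)); lra).
  set (delta := eps / (2 * c)).
  assert (Hd : 0 < delta) by (unfold delta; apply Rdiv_lt_0_compat; lra).
  set (eta := Rmin 1 (eps / (4 * exp (lam + 1)))).
  assert (Heta : 0 < eta).
  { unfold eta. apply Rmin_pos; [lra|]. apply Rdiv_lt_0_compat; [lra|]. pose proof (exp_pos (lam+1)); lra. }
  destruct (Hcv eta Heta) as [N1 HN1].
  destruct (INR_unbounded ((lam + 1) / delta ^ ell)) as [N2 HN2].
  exists (max N1 N2). intros n Hn Hn1 Gamma L HL.
  pose proof (Hp n Hn1) as Hpn.
  specialize (HN1 n ltac:(lia)). unfold Rdist in HN1.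
  set (mu := INR n * p n ^ ell) in *.
  assert (Hmu_close : Rabs (lam - mu) < eta) by (rewrite Rabs_minus_sym; auto).
  assert (Heta1 : eta <= 1) by apply Rmin_l.
  assert (Heta2 : eta <= eps / (4 * exp (lam + 1))) by apply Rmin_r.
  assert (Hmu1 : mu < lam + 1) by (apply Rabs_def2 in Hmu_close; lra).
  assert (Hpd : p n < delta).
  { destruct (Rlt_or_le (p n) delta) as [h|h]; auto. exfalso.
    assert (delta ^ ell <= p n ^ ell) by (apply pow_incr; lra).
    assert (INR N2 <= INR n) by (apply le_INR; lia).
    assert (0 < delta ^ ell) by (apply pow_lt; lra).
    assert ((lam + 1) < INR N2 * delta ^ ell).
    { apply (Rmult_lt_reg_r (/ delta ^ ell)). apply Rinv_0_lt_compat; auto.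
      rewrite Rmult_assoc, Rinv_r by lra. rewrite Rmult_1_r. unfold Rdiv in HN2. lra. }
    assert (INR N2 * delta ^ ell <= mu).
    { unfold mu. apply Rmult_le_compat; try lra. apply pos_INR. }
    lra. }
  destruct (P1 lam Hlam n Hn1 Gamma) as [L0 [HL0 Hb]].
  rewrite (uniqueness_sum _ _ _ HL HL0). fold mu c in Hb.
  assert (c * p n < eps / 2).
  { unfold delta in Hpd. apply (Rmult_lt_compat_l c) in Hpd; auto.
    replace (c * (eps / (2 * c))) with (eps / 2) in Hpd by (field; lra). lra. }
  assert (exp (Rmax lam mu) <= exp (lam + 1)).
  { apply exp_le. apply Rmax_lub; lra. }
  assert (2 * Rabs (lam - mu) * exp (Rmax lam mu) < eps / 2).
  { pose proof (exp_pos (Rmax lam mu)). pose proof (exp_pos (lam + 1)).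
    assert (Rabs (lam - mu) * exp (Rmax lam mu) <= eta * exp (lam + 1)).
    { apply Rmult_le_compat; try lra; apply Rabs_pos. }
    assert (eta * exp (lam + 1) <= eps / 4).
    { apply (Rmult_le_compat_r (exp (lam + 1))) in Heta2; [|lra].
      replace (eps / (4 * exp (lam + 1)) * exp (lam + 1)) with (eps / 4) in Heta2 by (field; lra). lra. }
    assert (Rabs (lam - mu) * exp (Rmax lam mu) < eta * exp (lam + 1)).
    { assert (Rabs (lam - mu) * exp (Rmax lam mu) <= Rabs (lam - mu) * exp (lam + 1)).
      { apply Rmult_le_compat_l; auto; apply Rabs_pos. }
      assert (Rabs (lam - mu) * exp (lam + 1) < eta * exp (lam + 1)) by (apply Rmult_lt_compat_r; auto).
      lra. }
    lra. }
  lra.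
Qed.
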